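(* Let $\boldsymbol{\nu}$ be a bandit instance with $\nu_a=\mathrm{Bernoulli}(\mu_a)$ and $\mu_1>\mu_2\ge\dots\ge\mu_K$. Let $\Delta_a=\mu_1-\mu_a$ and $\Delta_{\min}=\min_{a\ne1}\Delta_a$. Then $$T^\star_{\mathrm{TV}}(\boldsymbol{\nu})=\frac{1}{\Delta_{\min}}+\sum_{a=2}^K\frac{1}{\Delta_a},\qquad\text{and}\qquad \frac{1}{\Delta_{\min}}\le T^\star_{\mathrm{TV}}(\boldsymbol{\nu})\le\frac{K}{\Delta_{\min}}.$$
   Context: $\big(T^\star_{\mathrm{TV}}(\boldsymbol{\nu})\big)^{-1}=\sup_{\omega\in\Sigma_K}\inf_{\boldsymbol{\lambda}\in\operatorname{Alt}(\boldsymbol{\nu})}\sum_{a=1}^K\omega_a\mathrm{TV}(\nu_a,\lambda_a)$, where $\Sigma_K$ is the probability simplex in $\mathbb{R}^K$, $\mathrm{TV}(P,Q)=\sup_A(P(A)-Q(A))$, and $\operatorname{Alt}(\boldsymbol{\nu})$ is the set of Bernoulli instances $\boldsymbol{\lambda}=(\mathrm{Bernoulli}(\rho_a))_{a\in[K]}$ whose optimal arm (arm of largest mean) differs from that of $\boldsymbol{\nu}$. *)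

(* Defs.v *)
From HB Require Import structures.
From mathcomp Require Import all_boot all_order all_algebra.
From mathcomp Require Import all_classical all_reals.
Set Implicit Arguments. Unset Strict Implicit. Unset Printing Implicit Defensive.
Import Order.TTheory GRing.Theory Num.Theory.
Local Open Scope classical_set_scope.
Local Open Scope ring_scope.

(* Arms are indexed 1..K (natural numbers); values outside 1..K are irrelevant. *)

(* The Bernoulli(p) distribution on {0,1} ~ bool (true = 1), as a function
   on events A : {set bool}. *)
Definition bernoulli {R : realType} (p : R) (A : {set bool}) : R :=
  (if true \in A then p else 0) + (if false \in A then 1 - p else 0).

Definition TV {R : realType} (P Q : {set bool} -> R) : R :=
  sup [set P A - Q A | A in [set: {set bool}]].

Definition simplex {R : realType} (K : nat) : set (nat -> R) :=
  [set w | (forall a, (1 <= a <= K)%N -> 0 <= w a) /\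
           \sum_(1 <= a < K.+1) w a = 1].

(* Alt(nu) for an instance whose unique optimal arm is arm 1: Bernoulli
   instances (rho_a)_{a in [K]} with rho_a in [0,1] whose optimal arm is not 1,
   i.e. some arm a <> 1 has strictly larger mean than arm 1. *)
Definition Alt1 {R : realType} (K : nat) : set (nat -> R) :=
  [set rho | (forall a, (1 <= a <= K)%N -> 0 <= rho a <= 1) /\
             exists a, (2 <= a <= K)%N /\ rho 1%N < rho a].

Definition Tstar_TV {R : realType} (K : nat) (mu : nat -> R) : R :=
  (sup [set inf [set \sum_(1 <= a < K.+1)
                        w a * TV (bernoulli (mu a)) (bernoulli (rho a))
                 | rho in Alt1 K]
       | w in simplex K])^-1.

(* Main.v *)
Require Import Defs.
From HB Require Import structures.
From mathcomp Require Import all_boot all_order all_algebra.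
From mathcomp Require Import all_classical all_reals.
From mathcomp Require Import ring lra.
Import Order.TTheory GRing.Theory Num.Theory.
Local Open Scope classical_set_scope.
Local Open Scope ring_scope.

Lemma sup_eq_max (R : realType) (E : set R) (v : R) :
  E v -> ubound E v -> sup E = v.
Proof.
move=> Ev ub; apply/le_anti/andP; split.
  by apply: ge_sup => //; exists v.
by apply: ub_le_sup => //; exists v.
Qed.

Lemma TV_bern (R : realType) (p q : R) : TV (bernoulli p) (bernoulli q) = `|p - q|.
Proof.
rewrite /TV; apply: sup_eq_max.
  have [pq|qp] := lerP q p.
    exists [set true]%SET => //; rewrite /bernoulli !inE /=; lra.
  exists [set false]%SET => //; rewrite /bernoulli !inE /=; lra.
have h1 := ler_norm (p - q).
have h2 : q - p <= `|p - q| by rewrite distrC ler_norm.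
have h3 := normr_ge0 (p - q).
move=> y [A _ <-]; rewrite /bernoulli.
by case: (true \in A); case: (false \in A); lra.
Qed.
Lemma sum_split (R : realType) (F : nat -> R) K a : (2 <= a <= K)%N ->
  \sum_(1 <= b < K.+1) F b = F 1%N + F a + \sum_(2 <= b < K.+1 | b != a) F b.
Proof.
move=> /andP[ha1 ha2].
rewrite big_ltn; last by rewrite ltnS (leq_trans _ ha2) // (leq_trans _ ha1).
rewrite -addrA; congr (_ + _).
rewrite (bigD1_seq a) //=; last exact: iota_uniq.
by rewrite mem_index_iota ha1 ltnS.
Qed.

Lemma sum_ge0_range (R : realType) (F : nat -> R) m n :
  (forall b, (m <= b < n)%N -> 0 <= F b) -> 0 <= \sum_(m <= b < n) F b.
Proof.
move=> h; rewrite big_nat; apply: sumr_ge0 => b hb; exact: h.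
Qed.

Lemma inf_le_pair (R : realType) K (mu w : nat -> R) a x y :
  (forall b, (1 <= b <= K)%N -> 0 <= mu b <= 1) ->
  (forall b, (1 <= b <= K)%N -> 0 <= w b) ->
  (2 <= a <= K)%N -> 0 <= x -> y <= 1 -> x < y ->
  inf [set \sum_(1 <= b < K.+1) w b * TV (bernoulli (mu b)) (bernoulli (rho b))
      | rho in Alt1 K] <= w 1%N * `|mu 1%N - x| + w a * `|mu a - y|.
Proof.
move=> hmu hw ha hx hy hxy.
have a1 : (a != 1)%N by case/andP: ha; case: a => [|[|]].
pose rho := fun b => if b == 1%N then x else if b == a then y else mu b.
have lb : has_lbound [set \sum_(1 <= b < K.+1) w b * TV (bernoulli (mu b)) (bernoulli (rho b))
      | rho in Alt1 K].
  exists 0 => z [r _ <-]; apply: sum_ge0_range => b hb.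
  rewrite TV_bern; apply: mulr_ge0 => //; apply: hw.
  by case/andP: hb => -> /=; rewrite ltnS.
apply: ge_inf => //; exists rho.
  split.
    move=> b hb; rewrite /rho; case: ifP => _; first lra.
    case: ifP => _; first lra.
    exact: hmu.
  by exists a; split => //; rewrite /rho /= (negbTE a1) eqxx.
rewrite (@sum_split _ (fun b => w b * TV (bernoulli (mu b)) (bernoulli (rho b))) _ _ ha) /rho eqxx (negbTE a1) eqxx !TV_bern.
rewrite big1_seq ?addr0 //.
move=> b /andP[hb]; rewrite mem_index_iota => /andP[hb2 _].
have -> : (b == 1%N) = false by case: b hb2 {hb} => [|[|]].
by rewrite (negbTE hb) TV_bern subrr normr0 mulr0.
Qed.

Lemma inf_le_c (R : realType) K (mu w : nat -> R) :
  (2 <= K)%N ->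
  (forall a, (1 <= a <= K)%N -> 0 <= mu a <= 1) ->
  mu 2%N < mu 1%N ->
  (forall a, (2 <= a <= K)%N -> mu a <= mu 2%N) ->
  simplex K w ->
  inf [set \sum_(1 <= b < K.+1) w b * TV (bernoulli (mu b)) (bernoulli (rho b))
      | rho in Alt1 K] <=
  ((mu 1%N - mu 2%N)^-1 + \sum_(2 <= a < K.+1) (mu 1%N - mu a)^-1)^-1.
Proof.
move=> K2 hmu h12 hle [hw hsum].
set S := \sum_(2 <= a < K.+1) _.
set c := (_ + S)^-1.
have Dpos a : (2 <= a <= K)%N -> 0 < mu 1%N - mu a.
  by move=> /hle; lra.
have S0 : 0 <= S.
  apply: sum_ge0_range => b /andP[hb1 hb2]; rewrite invr_ge0 ltW //.
  by apply: Dpos; rewrite hb1 -ltnS.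
have D20 : 0 < mu 1%N - mu 2%N by lra.
have Tpos : 0 < (mu 1%N - mu 2%N)^-1 + S.
  by have := invr_gt0 (mu 1%N - mu 2%N); rewrite D20 /=; lra.
have c0 : 0 < c by rewrite invr_gt0.
have cT : c * ((mu 1%N - mu 2%N)^-1 + S) = 1 by rewrite mulVf // gt_eqF.
have [a ha hca] : exists2 a, (2 <= a <= K)%N &
    (w 1%N * (mu 1%N - mu a) <= c) || (w a * (mu 1%N - mu a) <= c).
  have /hasP[a] : has (fun a => (w 1%N * (mu 1%N - mu a) <= c) ||
                                (w a * (mu 1%N - mu a) <= c)) (index_iota 2 K.+1).
    apply/negPn/negP => /hasPn H.
    have H1 : c / (mu 1%N - mu 2%N) < w 1%N.
      have := H 2%N (ltac:(by rewrite mem_index_iota /= ltnS)).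
      rewrite negb_or -!ltNge => /andP[h _].
      by rewrite ltr_pdivrMr.
    have H2 : c * S <= \sum_(2 <= a < K.+1) w a.
      rewrite /S mulr_sumr; apply: ler_sum_nat => i hi.
      have := H i; rewrite mem_index_iota hi => /(_ isT).
      rewrite negb_or -!ltNge => /andP[_ h].
      have hi' : (2 <= i <= K)%N by rewrite -ltnS.
      by rewrite ler_pdivrMr ?Dpos //; apply: ltW.
    move: hsum; rewrite big_ltn ?ltnS; last by apply: leq_trans K2.
    move: cT; rewrite mulrDr.
    lra.
  by rewrite mem_index_iota ltnS => ha hca; exists a.
have Da := Dpos a ha.
have wa0 : 0 <= w a by apply: hw; case/andP: ha => ha1 ->; rewrite andbT; apply: leq_trans ha1.
have w10 : 0 <= w 1%N by apply: hw; rewrite /= (leq_trans _ K2).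
have [mua1 mua2] : 0 <= mu a /\ mu a <= 1.
  by apply/andP/hmu; case/andP: ha => ha1 ->; rewrite andbT; apply: leq_trans ha1.
have [mu11 mu12] : 0 <= mu 1%N /\ mu 1%N <= 1.
  by apply/andP/hmu; rewrite /= (leq_trans _ K2).
apply/ler_addgt0Pr => e e0.
case/orP: hca => hca.
- pose k := w a * (mu 1%N - mu a).
  have k0 : 0 <= k by rewrite mulr_ge0 // ltW.
  pose eta := e / (e + k).
  have ek : eta * (e + k) = e by rewrite /eta mulfVK // gt_eqF //; lra.
  have eta0 : 0 < eta by rewrite divr_gt0 //; lra.
  have eta1 : eta <= 1 by rewrite ler_pdivrMr; lra.
  have hp := @inf_le_pair R K mu w a (mu a) (mu a + eta * (mu 1%N - mu a))
    hmu hw ha mua1.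
  have hy : mu a + eta * (mu 1%N - mu a) <= 1 by nra.
  have hxy : mu a < mu a + eta * (mu 1%N - mu a) by nra.
  move: (hp hy hxy).
  rewrite ger0_norm; last lra.
  rewrite (_ : mu a - _ = - (eta * (mu 1%N - mu a))); last by ring.
  rewrite normrN ger0_norm; last nra.
  move=> /le_trans; apply.
  rewrite /k in ek k0; nra.
- pose k := w 1%N * (mu 1%N - mu a).
  have k0 : 0 <= k by rewrite mulr_ge0 // ltW.
  pose eta := e / (e + k).
  have ek : eta * (e + k) = e by rewrite /eta mulfVK // gt_eqF //; lra.
  have eta0 : 0 < eta by rewrite divr_gt0 //; lra.
  have eta1 : eta <= 1 by rewrite ler_pdivrMr; lra.
  have hp := @inf_le_pair R K mu w a (mu 1%N - eta * (mu 1%N - mu a)) (mu 1%N)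
    hmu hw ha.
  have hx : 0 <= mu 1%N - eta * (mu 1%N - mu a) by nra.
  have hxy : mu 1%N - eta * (mu 1%N - mu a) < mu 1%N by nra.
  move: (hp hx mu12 hxy).
  rewrite (_ : mu 1%N - (_ - _) = eta * (mu 1%N - mu a)); last by ring.
  rewrite ger0_norm; last nra.
  rewrite distrC ger0_norm; last lra.
  move=> /le_trans; apply.
  rewrite /k in ek k0; nra.
Qed.

Lemma inf_star (R : realType) K (mu : nat -> R) :
  (2 <= K)%N ->
  (forall a, (1 <= a <= K)%N -> 0 <= mu a <= 1) ->
  mu 2%N < mu 1%N ->
  (forall a, (2 <= a <= K)%N -> mu a <= mu 2%N) ->
  let c := ((mu 1%N - mu 2%N)^-1 + \sum_(2 <= a < K.+1) (mu 1%N - mu a)^-1)^-1 in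
  let w := fun b => if b == 1%N then c / (mu 1%N - mu 2%N) else c / (mu 1%N - mu b) in
  simplex K w /\
  inf [set \sum_(1 <= b < K.+1) w b * TV (bernoulli (mu b)) (bernoulli (rho b))
      | rho in Alt1 K] = c.
Proof.
move=> K2 hmu h12 hle.
set S := \sum_(2 <= a < K.+1) _.
move=> c w.
have Dpos a : (2 <= a <= K)%N -> 0 < mu 1%N - mu a.
  by move=> /hle; lra.
have S0 : 0 <= S.
  apply: sum_ge0_range => b /andP[hb1 hb2]; rewrite invr_ge0 ltW //.
  by apply: Dpos; rewrite hb1 -ltnS.
have D20 : 0 < mu 1%N - mu 2%N by lra.
have Tpos : 0 < (mu 1%N - mu 2%N)^-1 + S.
  by have := invr_gt0 (mu 1%N - mu 2%N); rewrite D20 /=; lra.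
have c0 : 0 < c by rewrite invr_gt0.
have cT : c * ((mu 1%N - mu 2%N)^-1 + S) = 1 by rewrite mulVf // gt_eqF.
have hsimp : simplex K w.
  split.
    move=> b /andP[hb1 hb2]; rewrite /w; case: ifP => hb.
      by rewrite divr_ge0 // ltW.
    rewrite divr_ge0 // ltW // Dpos // hb2 andbT.
    by case: b hb1 hb2 hb => [|[|]].
  rewrite big_ltn ?ltnS; last by apply: leq_trans K2.
  rewrite /w eqxx.
  rewrite (eq_big_nat _ _ (F2 := fun b => c / (mu 1%N - mu b))); last first.
    by move=> i /andP[hi _]; case: i hi => [|[|]].
  by rewrite -mulr_sumr -/S -cT mulrDr.
split => //.
apply/le_anti/andP; split.
  exact: inf_le_c.
apply: lb_le_inf.
  exists (\sum_(1 <= b < K.+1) w b * TV (bernoulli (mu b))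
            (bernoulli ((fun b => if b == 2%N then 1 else 0) b))).
  exists (fun b => if b == 2%N then 1 else 0) => //.
  split; first by move=> b _; case: ifP => _; rewrite ?lexx ?ler01.
  by exists 2%N; split; [rewrite leqnn K2 | rewrite /= ltr01].
move=> z [rho [hr [a [ha hlt]]] <-].
have a1 : (a != 1)%N by case/andP: ha; case: a {hlt} => [|[|]].
rewrite (@sum_split _ (fun b => w b * TV (bernoulli (mu b)) (bernoulli (rho b))) _ _ ha).
have rest : 0 <= \sum_(2 <= b < K.+1 | b != a)
                  w b * TV (bernoulli (mu b)) (bernoulli (rho b)).
  rewrite big_seq_cond; apply: sumr_ge0 => b /andP[]; rewrite mem_index_iota => /andP[hb1 hb2] _.
  rewrite TV_bern mulr_ge0 // /w; case: ifP => _.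
    by rewrite divr_ge0 // ltW.
  by rewrite divr_ge0 // ltW // Dpos // hb1 -ltnS.
rewrite !TV_bern /w eqxx (negbTE a1).
have Da := Dpos a ha.
have u1 := ler_norm (mu 1%N - rho 1%N).
have u2 : rho a - mu a <= `|mu a - rho a| by rewrite distrC ler_norm.
have n1 := normr_ge0 (mu 1%N - rho 1%N).
have n2 := normr_ge0 (mu a - rho a).
set q := c / (mu 1%N - mu a).
have qD : q * (mu 1%N - mu a) = c by rewrite /q mulfVK // gt_eqF.
have q0 : 0 <= q by rewrite /q divr_ge0 // ltW.
have pq : q <= c / (mu 1%N - mu 2%N).
  rewrite /q ler_pM2l // lef_pV2 ?posrE //; have := hle a ha; lra.
nra.
Qed.

Theorem proposition1 (R : realType) (K : nat) (mu : nat -> R) :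
  (2 <= K)%N ->
  (forall a, (1 <= a <= K)%N -> 0 <= mu a <= 1) ->
  mu 2%N < mu 1%N ->
  (forall a, (2 <= a < K)%N -> mu a.+1 <= mu a) ->
  let Delta := fun a => mu 1%N - mu a in
  let Delta_min := \big[Num.min/Delta 2%N]_(2 <= a < K.+1) Delta a in
  Tstar_TV K mu = (Delta_min)^-1 + \sum_(2 <= a < K.+1) (Delta a)^-1 /\
  (Delta_min)^-1 <= Tstar_TV K mu <= K%:R / Delta_min.
Proof.
move=> K2 hmu h12 hmono Delta Delta_min.
have hle : forall a, (2 <= a <= K)%N -> mu a <= mu 2%N.
  have H n : (2 + n <= K)%N -> mu (2 + n)%N <= mu 2%N.
    elim: n => [|n IH] h; first by rewrite addn0 lexx.
    apply: le_trans (IH _); last by apply: leq_trans h; rewrite leq_add2l.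
    rewrite addnS; apply: hmono.
    by rewrite leq_addr /= -addnS.
  move=> a /andP[ha1 ha2]; have := H (a - 2)%N; rewrite subnKC //; exact.
have DminE : Delta_min = Delta 2%N.
  rewrite /Delta_min big_seq.
  apply: (big_rec (fun y => y = Delta 2%N)) => // i y.
  rewrite mem_index_iota => /andP[hi1 hi2] ->.
  apply: min_r; rewrite /Delta; have := hle i; rewrite hi1 -ltnS hi2 => /(_ isT).
  lra.
have [hsimp hinf] := @inf_star R K mu K2 hmu h12 hle.
set S := \sum_(2 <= a < K.+1) (Delta a)^-1.
have Dpos a : (2 <= a <= K)%N -> 0 < Delta a.
  by move=> /hle; rewrite /Delta; lra.
have S0 : 0 <= S.
  apply: sum_ge0_range => b /andP[hb1 hb2]; rewrite invr_ge0 ltW //.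
  by apply: Dpos; rewrite hb1 -ltnS.
have TE : Tstar_TV K mu = (Delta 2%N)^-1 + S.
  rewrite /Tstar_TV (@sup_eq_max _ _ (((Delta 2%N)^-1 + S)^-1)) ?invrK //.
    by eexists; [exact: hsimp | exact: hinf].
  move=> y [w hw <-]; exact: inf_le_c.
rewrite DminE TE; split => //.
have D2 := Dpos 2%N (ltac:(by rewrite leqnn K2)).
have h1 : 0 < (Delta 2%N)^-1 by rewrite invr_gt0.
apply/andP; split; first lra.
have : S <= \sum_(2 <= a < K.+1) (Delta 2%N)^-1.
  apply: ler_sum_nat => i /andP[hi1 hi2].
  have hi : (2 <= i <= K)%N by rewrite hi1 -ltnS.
  rewrite lef_pV2 ?posrE ?Dpos //.
  rewrite /Delta; have := hle i; rewrite hi1 -ltnS hi2 => /(_ isT); lra.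
rewrite sumr_const_nat -[_ *+ _]mulr_natr.
have -> : ((K.+1 - 2)%:R : R) = K%:R - 1.
  by rewrite subSS natrB // (leq_trans _ K2).
move=> h; rewrite mulrBr mulr1 in h; rewrite mulrC.
move: h; set x := (Delta 2%N)^-1; clear -S0; move: (x * K%:R) => y; lra.
Qed.
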